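(* Fix a task $(\mathcal{S},\mathcal{A},\_,d_0,\mathcal{R},\gamma)$ and let $\Pi_{\mathrm{NS}}$ be the set of all non-stationary policies. Let $\mathcal{T},\mathcal{T}'$ be transition models such that $J_{\mathcal{T}}$ and $J_{\mathcal{T}'}$ are both non-trivial on $\Pi_{\mathrm{NS}}$ and are not equivalent on $\Pi_{\mathrm{NS}}$. Then $(\mathcal{T},\mathcal{T}')$ is exploitable relative to $\Pi_{\mathrm{NS}}$ and this task.
   Context: A Markov decision process (MDP) is $(\mathcal{S},\mathcal{A},\mathcal{T},d_0,\mathcal{R},\gamma)$ with finite state space $\mathcal{S}$, finite action space $\mathcal{A}$ with $|\mathcal{A}|>1$, transition model $\mathcal{T}:\mathcal{S}\times\mathcal{A}\to\Delta(\mathcal{S})$, initial distribution $d_0\in\Delta(\mathcal{S})$, reward $\mathcal{R}:\mathcal{S}\times\mathcal{A}\to\mathbb{R}$, discount $\gamma\in[0,1)$; all states are assumed reachable. A task is an MDP without its transition model, $(\mathcal{S},\mathcal{A},\_,d_0,\mathcal{R},\gamma)$. A non-stationary policy is a sequence $\pi=(\pi_0,\pi_1,\dots)$ of maps $\pi_t:\mathcal{S}\to\Delta(\mathcal{A})$ (action at time $t$ drawn from $\pi_t(\cdot\mid s_t)$). For a transition model $\mathcal{T}$, $J_{\mathcal{T}}(\pi)=\mathbb{E}\big[\sum_{t\ge0}\gamma^t\mathcal{R}(s_t,a_t)\big]$ where $s_0\sim d_0$, $a_t\sim\pi_t(\cdot\mid s_t)$, $s_{t+1}\sim\mathcal{T}(\cdot\mid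 s_t,a_t)$. A value function $J$ is trivial on a policy set $\Pi$ if it is constant on $\Pi$. Two value functions $J_1,J_2$ are equivalent on $\Pi$ if for all $\pi,\pi'\in\Pi$, $J_1(\pi)\ge J_1(\pi')\iff J_2(\pi)\ge J_2(\pi')$. Transition models $\mathcal{T},\mathcal{T}'$ are exploitable relative to $\Pi$ and a task if there exist $\pi,\pi'\in\Pi$ with $J_{\mathcal{T}}(\pi)>J_{\mathcal{T}}(\pi')$ and $J_{\mathcal{T}'}(\pi')>J_{\mathcal{T}'}(\pi)$; otherwise unexploitable. *)

(* Defs.v *)
From HB Require Import structures.
From mathcomp Require Import all_boot all_order all_algebra.
From mathcomp Require Import all_classical all_reals all_analysis.
Set Implicit Arguments. Unset Strict Implicit. Unset Printing Implicit Defensive.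
Import Order.TTheory GRing.Theory Num.Theory.
Import numFieldNormedType.Exports.
Local Open Scope ring_scope.

Section MDP.
Variables (R : realType) (S A : finType).

Definition is_dist (T : finType) (p : T -> R) : Prop :=
  (forall x, 0 <= p x) /\ \sum_(x : T) p x = 1.

(* transition model T(s,a) in Delta(S): Tm s a s' = T(s' | s, a) *)
Definition is_transition (Tm : S -> A -> S -> R) : Prop :=
  forall s a, is_dist (Tm s a).

(* non-stationary policy: pi t s a = pi_t(a | s) *)
Definition is_policy (pi : nat -> S -> A -> R) : Prop :=
  forall t s, is_dist (pi t s).

Fixpoint state_dist (d0 : S -> R) (Tm : S -> A -> S -> R)
    (pi : nat -> S -> A -> R) (t : nat) : S -> R :=
  match t with
  | 0 => d0
  | t'.+1 => fun s' => \sum_(s : S) \sum_(a : A)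
        state_dist d0 Tm pi t' s * pi t' s a * Tm s a s'
  end.

(* J_T(pi) = E[sum_t gamma^t R(s_t,a_t)] = sum_t gamma^t E[R(s_t,a_t)] *)
Definition value (d0 : S -> R) (Rw : S -> A -> R) (gamma : R)
    (Tm : S -> A -> S -> R) (pi : nat -> S -> A -> R) : R :=
  limn (@series R (fun t : nat => gamma ^+ t *
     \sum_(s : S) \sum_(a : A) state_dist d0 Tm pi t s * pi t s a * Rw s a)).

Definition all_reachable (d0 : S -> R) (Tm : S -> A -> S -> R) : Prop :=
  forall s, exists pi t, is_policy pi /\ 0 < state_dist d0 Tm pi t s.

Definition trivial_on_NS (J : (nat -> S -> A -> R) -> R) : Prop :=
  forall pi pi', is_policy pi -> is_policy pi' -> J pi = J pi'.

Definition equivalent_on_NS (J1 J2 : (nat -> S -> A -> R) -> R) : Prop :=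
  forall pi pi', is_policy pi -> is_policy pi' ->
    ((J1 pi' <= J1 pi) <-> (J2 pi' <= J2 pi)).

Definition exploitable_on_NS (J1 J2 : (nat -> S -> A -> R) -> R) : Prop :=
  exists pi pi', is_policy pi /\ is_policy pi' /\
    J1 pi' < J1 pi /\ J2 pi < J2 pi'.

End MDP.

(* Main.v *)
Require Import Defs.
From HB Require Import structures.
From mathcomp Require Import all_boot all_order all_algebra.
From mathcomp Require Import all_classical all_reals all_analysis.
From mathcomp Require Import lra.
Set Implicit Arguments. Unset Strict Implicit. Unset Printing Implicit Defensive.
Import Order.TTheory GRing.Theory Num.Theory.
Import numFieldNormedType.Exports.
Local Open Scope ring_scope.
Local Open Scope classical_set_scope.

Section Basic.
Variables (R : realType) (S A : finType) (Rw : S -> A -> R) (gamma : R)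
  (Tm : S -> A -> S -> R).
Hypotheses (hg0 : 0 <= gamma) (hg1 : gamma < 1) (hT : is_transition Tm).

Definition uu (d : S -> R) (pi : nat -> S -> A -> R) (t : nat) : R :=
  gamma ^+ t * \sum_(s : S) \sum_(a : A) state_dist d Tm pi t s * pi t s a * Rw s a.

Lemma valueE d pi : value d Rw gamma Tm pi = limn (series (uu d pi)).
Proof. by []. Qed.

Lemma dist_le1 (T : finType) (p : T -> R) x : is_dist p -> p x <= 1.
Proof.
move=> [p0 p1]; rewrite -p1 (bigD1 x) //= lerDl sumr_ge0 //.
Qed.

Lemma sd_dist d pi : is_dist d -> is_policy pi -> forall t, is_dist (state_dist d Tm pi t).
Proof.
move=> hd hpi; elim=> [|t [IH0 IH1]] //=; split.
- by move=> s'; apply: sumr_ge0 => s _; apply: sumr_ge0 => a _;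
    rewrite !mulr_ge0 //; [case: (hpi t s) | case: (hT s a)].
- rewrite exchange_big /= -IH1; apply: eq_bigr => s _.
  rewrite exchange_big /=.
  transitivity (\sum_(a : A) state_dist d Tm pi t s * pi t s a).
    by apply: eq_bigr => a _; rewrite -mulr_sumr; case: (hT s a) => _ ->; rewrite mulr1.
  by rewrite -mulr_sumr; case: (hpi t s) => _ ->; rewrite mulr1.
Qed.

Definition MM := \sum_(s : S) \sum_(a : A) `|Rw s a|.

Lemma MM_ge0 : 0 <= MM.
Proof. by apply: sumr_ge0 => s _; apply: sumr_ge0. Qed.

Lemma uu_bound d pi t : is_dist d -> is_policy pi -> `|uu d pi t| <= gamma ^+ t * MM.
Proof.
move=> hd hpi; rewrite /uu normrM ger0_norm ?exprn_ge0 //.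
apply: ler_wpM2l; first exact: exprn_ge0.
apply: (le_trans (ler_norm_sum _ _ _)); apply: ler_sum => s _.
apply: (le_trans (ler_norm_sum _ _ _)); apply: ler_sum => a _.
have [h0 _] := sd_dist hd hpi t; have [p0 _] := hpi t s.
rewrite !normrM (ger0_norm (h0 s)) (ger0_norm (p0 a)).
rewrite -[leRHS]mul1r; apply: ler_wpM2r => //.
rewrite -[1]mul1r; apply: ler_pM => //.
  by apply: dist_le1; apply: sd_dist.
by apply: dist_le1.
Qed.

Lemma uu_cvg d pi : is_dist d -> is_policy pi ->
  cvgn (series (uu d pi)) /\ `|limn (series (uu d pi))| <= MM / (1 - gamma).
Proof.
move=> hd hpi.
have ag : `|gamma| < 1 by rewrite ger0_norm.
have cg := @cvg_geometric_series R MM gamma ag.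
have cn : cvgn [normed series (uu d pi)].
  apply: (@series_le_cvg _ _ (geometric MM gamma)) => //.
  - by move=> n /=.
  - by move=> n /=; rewrite mulr_ge0 ?exprn_ge0 ?MM_ge0.
  - by move=> n /=; rewrite mulrC uu_bound.
  - by apply/cvg_ex; eexists; exact: cg.
split; first exact: normed_cvg.
apply: (le_trans (lim_series_norm cn)).
rewrite -(cvg_lim _ cg) //.
apply: lim_series_le => //.
  by apply/cvg_ex; eexists; exact: cg.
by move=> n /=; rewrite mulrC uu_bound.
Qed.

Definition delta (x : S) : S -> R := fun y => (y == x)%:R.

Lemma delta_dist x : is_dist (delta x).
Proof.
split; first by move=> y; rewrite /delta ler0n.
by rewrite (bigD1 x) //= /delta eqxx big1 ?addr0 // => y /negbTE ->.
Qed.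

Lemma sd_shift d pi k n : state_dist d Tm pi (n + k)%N =
  state_dist (state_dist d Tm pi k) Tm (fun t => pi (t + k)%N) n.
Proof. by elim: n => [|n IH] //; rewrite addSn /= IH. Qed.

Lemma sd_lin d pi t s' : state_dist d Tm pi t s' =
  \sum_x d x * state_dist (delta x) Tm pi t s'.
Proof.
elim: t s' => [|t IH] s' /=.
  rewrite (bigD1 s') //= /delta eqxx mulr1 big1 ?addr0 // => x.
  by rewrite eq_sym => /negbTE ->; rewrite mulr0.
transitivity (\sum_s \sum_a \sum_x d x *
   (state_dist (delta x) Tm pi t s * pi t s a * Tm s a s')).
  apply: eq_bigr => s _; apply: eq_bigr => a _; rewrite IH !mulr_suml.
  by apply: eq_bigr => x _; rewrite !mulrA.
under [RHS]eq_bigr do rewrite mulr_sumr.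
under [RHS]eq_bigr do under eq_bigr do rewrite mulr_sumr.
rewrite [RHS]exchange_big /=; apply: eq_bigr => s _.
by rewrite [RHS]exchange_big.
Qed.

Lemma uu_shift d pi k n : uu d pi (n + k)%N = gamma ^+ k *
  \sum_x state_dist d Tm pi k x * uu (delta x) (fun t => pi (t + k)%N) n.
Proof.
rewrite /uu sd_shift exprD [gamma ^+ n * _]mulrC -mulrA; congr (_ * _).
under [RHS]eq_bigr do rewrite mulrCA; rewrite -mulr_sumr; congr (_ * _).
under eq_bigr do under eq_bigr do rewrite sd_lin !mulr_suml.
under [RHS]eq_bigr do rewrite mulr_sumr.
under [RHS]eq_bigr do under eq_bigr do rewrite mulr_sumr.
rewrite [RHS]exchange_big /=; apply: eq_bigr => s _.
rewrite [RHS]exchange_big /=; apply: eq_bigr => a _.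
by apply: eq_bigr => x _; rewrite !mulrA.
Qed.

Lemma cvg_bigsum (I : Type) (s : seq I) (f : I -> nat -> R) (l : I -> R) :
  (forall i, f i n @[n --> \oo] --> l i) ->
  \sum_(i <- s) f i n @[n --> \oo] --> \sum_(i <- s) l i.
Proof.
move=> h; elim: s => [|i s IH].
  by under eq_fun do rewrite big_nil; rewrite big_nil; exact: cvg_cst.
by under eq_fun do rewrite big_cons; rewrite big_cons; exact: cvgD.
Qed.

Lemma value_decomp d pi k : is_dist d -> is_policy pi ->
  value d Rw gamma Tm pi = \sum_(t < k) uu d pi t + gamma ^+ k *
   \sum_x state_dist d Tm pi k x * value (delta x) Rw gamma Tm (fun t => pi (t + k)%N).
Proof.
move=> hd hpi.
have hpis : is_policy (fun t => pi (t + k)%N) by move=> t s; exact: hpi.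
have cx x : series (uu (delta x) (fun t => pi (t + k)%N)) @ \oo -->
    value (delta x) Rw gamma Tm (fun t => pi (t + k)%N).
  by have [] := uu_cvg (delta_dist x) hpis.
have eqs n : series (uu d pi) (n + k)%N = \sum_(t < k) uu d pi t + gamma ^+ k *
   \sum_x state_dist d Tm pi k x * series (uu (delta x) (fun t => pi (t + k)%N)) n.
  elim: n => [|n IH].
    rewrite add0n seriesEord [X in _ * X]big1 ?mulr0 ?addr0 // => x _.
    by rewrite seriesEord /= big_ord0 mulr0.
  rewrite addSn seriesSr IH uu_shift -addrA -mulrDr -big_split /=.
  by congr (_ + _ * _); apply: eq_bigr => x _; rewrite seriesSr mulrDr.
rewrite valueE; apply: cvg_lim => //.
rewrite -(cvg_shiftn k) /=.
under eq_fun do rewrite eqs.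
apply: cvgD; first exact: cvg_cst.
apply: cvgMl_tmp; apply: cvg_bigsum => x; apply: cvgMl_tmp; exact: cx.
Qed.

Definition mix (b r : nat -> S -> A -> R) (k : nat) (l : R) : nat -> S -> A -> R :=
  fun t s a => if (t < k)%N then (1 - l) * b t s a + l * r t s a else b t s a.

Lemma mix_policy b r k l : is_policy b -> is_policy r -> 0 <= l <= 1 ->
  is_policy (mix b r k l).
Proof.
move=> hb hr /andP[l0 l1] t s; rewrite /mix; case: (t < k)%N; last exact: hb.
have [b0 b1] := hb t s; have [r0 r1] := hr t s; split.
  by move=> a; rewrite addr_ge0 ?mulr_ge0 ?subr_ge0.
by rewrite big_split /= -!mulr_sumr b1 r1 !mulr1 subrK.
Qed.

Lemma mix_shift b r k l : (fun t => mix b r k l (t + k)%N) = (fun t => b (t + k)%N).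
Proof. by apply: funext => t; rewrite /mix ltnNge leq_addl. Qed.

Definition mixP (b r : nat -> S -> A -> R) (k : nat) t s a : {poly R} :=
  if (t < k)%N then (1 - 'X) * (b t s a)%:P + 'X * (r t s a)%:P else (b t s a)%:P.

Fixpoint sdP (d : S -> R) b r k (t : nat) : S -> {poly R} :=
  match t with
  | 0 => fun s => (d s)%:P
  | t'.+1 => fun s' => \sum_(s : S) \sum_(a : A)
      sdP d b r k t' s * mixP b r k t' s a * (Tm s a s')%:P
  end.

Lemma mixP_eval b r k t s a l : (mixP b r k t s a).[l] = mix b r k l t s a.
Proof. by rewrite /mixP /mix; case: ifP => _; rewrite !hornerE. Qed.

Lemma sdP_eval d b r k t s l :
  (sdP d b r k t s).[l] = state_dist d Tm (mix b r k l) t s.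
Proof.
elim: t s => [|t IH] s /=; first by rewrite hornerC.
rewrite horner_sum; apply: eq_bigr => x _; rewrite horner_sum; apply: eq_bigr => a _.
by rewrite !hornerM hornerC IH mixP_eval.
Qed.

Definition uP d b r k t : {poly R} := (gamma ^+ t)%:P *
  \sum_(s : S) \sum_(a : A) sdP d b r k t s * mixP b r k t s a * (Rw s a)%:P.

Lemma uP_eval d b r k t l : (uP d b r k t).[l] = uu d (mix b r k l) t.
Proof.
rewrite /uP /uu hornerM hornerC horner_sum; congr (_ * _).
apply: eq_bigr => s _; rewrite horner_sum; apply: eq_bigr => a _.
by rewrite !hornerM hornerC sdP_eval mixP_eval.
Qed.

Lemma value_poly d b r k : is_dist d -> is_policy b -> is_policy r ->
  exists Q : {poly R}, forall l, 0 <= l <= 1 ->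
    value d Rw gamma Tm (mix b r k l) = Q.[l].
Proof.
move=> hd hb hr.
exists (\sum_(t < k) uP d b r k t + (gamma ^+ k)%:P * \sum_x sdP d b r k k x *
  (value (delta x) Rw gamma Tm (fun t => b (t + k)%N))%:P).
move=> l hl; rewrite (value_decomp k hd (mix_policy k hb hr hl)) mix_shift.
rewrite hornerD horner_sum hornerM hornerC horner_sum; congr (_ + _ * _).
  by apply: eq_bigr => t _; rewrite uP_eval.
by apply: eq_bigr => x _; rewrite hornerM hornerC sdP_eval.
Qed.

Lemma sd_agree d pi pi' k : (forall t s a, (t < k)%N -> pi t s a = pi' t s a) ->
  forall t, (t <= k)%N -> state_dist d Tm pi t = state_dist d Tm pi' t.
Proof.
move=> h; elim=> [|t IH] // ltk /=; rewrite IH ?(ltnW ltk) //.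
apply: funext => s'; apply: eq_bigr => s _; apply: eq_bigr => a _.
by rewrite h.
Qed.

Lemma uu_agree d pi pi' k : (forall t s a, (t < k)%N -> pi t s a = pi' t s a) ->
  forall t, (t < k)%N -> uu d pi t = uu d pi' t.
Proof.
move=> h t ltk; rewrite /uu (sd_agree d h (ltnW ltk)); congr (_ * _).
by apply: eq_bigr => s _; apply: eq_bigr => a _; rewrite h.
Qed.

Lemma small_pow (e : R) : 0 < e -> exists k, gamma ^+ k < e.
Proof.
move=> e0.
have ag : `|gamma| < 1 by rewrite ger0_norm.
have := cvgr0_norm_lt _ (cvg_expr ag) e e0.
case=> N _ HN; exists N; have := HN N (leqnn N) => /=.
by rewrite ger0_norm ?exprn_ge0.
Qed.

Lemma tail_close d b r : is_dist d -> is_policy b -> is_policy r ->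
  forall e, 0 < e -> exists k,
    `|value d Rw gamma Tm (mix b r k 1) - value d Rw gamma Tm r| < e.
Proof.
move=> hd hb hr e e0.
set K := 2 * MM / (1 - gamma) + 1.
have K0 : 0 < K.
  by rewrite /K ltr_wpDl // mulr_ge0 ?mulr_ge0 ?MM_ge0 // invr_ge0 subr_ge0 ltW.
have [k hk] := small_pow (divr_gt0 e0 K0).
exists k.
have ag : forall t s a, (t < k)%N -> mix b r k 1 t s a = r t s a.
  by move=> t s a ltk; rewrite /mix ltk subrr mul0r add0r mul1r.
have h01 : (0 <= (1:R)) && ((1:R) <= 1) by rewrite ler01 lexx.
have hm := mix_policy k hb hr h01.
rewrite (value_decomp k hd hm) (value_decomp k hd hr).
rewrite (sd_agree d ag (leqnn k)).
rewrite (eq_bigr _ (fun t _ => uu_agree d ag (ltn_ord t))).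
rewrite mix_shift opprD addrACA subrr add0r -mulrBr -sumrB.
rewrite normrM ger0_norm ?exprn_ge0 //.
apply: (@le_lt_trans _ _ (gamma ^+ k * K)); last by rewrite -ltr_pdivlMr.
apply: ler_wpM2l; first exact: exprn_ge0.
have [sd0 sd1] := sd_dist hd hr k.
apply: (le_trans (ler_norm_sum _ _ _)).
apply: (@le_trans _ _ (\sum_x state_dist d Tm r k x * K)); last first.
  by rewrite -mulr_suml sd1 mul1r.
apply: ler_sum => x _; rewrite -mulrBr normrM ger0_norm //.
apply: ler_wpM2l => //.
have hbs : is_policy (fun t => b (t + k)%N) by move=> t s; exact: hb.
have hrs : is_policy (fun t => r (t + k)%N) by move=> t s; exact: hr.
have [_ h1] := uu_cvg (delta_dist x) hbs.
have [_ h2] := uu_cvg (delta_dist x) hrs.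
rewrite -!valueE in h1 h2.
apply: (le_trans (ler_normB _ _)).
rewrite /K ler_wpDr // mulrC mulr2n.
rewrite mulrDl mul1r mulrDr; by apply: lerD; rewrite mulrC.
Qed.
End Basic.

Lemma mix0 (R : realType) (S A : finType) (b r : nat -> S -> A -> R) k :
  mix b r k 0 = b.
Proof.
apply: funext => t; apply: funext => s; apply: funext => a.
by rewrite /mix; case: (t < k)%N; rewrite // subr0 mul1r mul0r addr0.
Qed.

Lemma crossing (R : realType) (P H : {poly R}) (gp gq : R) : gp < gq ->
  (forall l, 0 <= l <= 1 -> 0 < P.[l] -> gq <= H.[l]) ->
  (forall l, 0 <= l <= 1 -> P.[l] < 0 -> H.[l] <= gp) ->
  H.[0] <= gp -> gq <= H.[1] -> P = 0.
Proof.
move=> hpq hpos hneg h0 h1; apply/eqP; apply/negPn/negP => Pn0.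
set d := gq - gp.
have d0 : 0 < d by rewrite subr_gt0.
have key : forall n, exists s : seq R, [/\ size s = n, uniq s, all (root P) s &
    all (fun l => gp + d / n.+1%:R <= H.[l]) s].
  elim=> [|n [s [sz us rs hs]]]; first by exists [::].
  set v := gp + d / n.+2%:R.
  have n1 : 0 < n.+1%:R :> R by rewrite ltr0n.
  have n2 : 0 < n.+2%:R :> R by rewrite ltr0n.
  have vlt : gp < v by rewrite /v ltrDl divr_gt0.
  have vlt2 : v < gq.
    rewrite /v -ltrBrDl -/d ltr_pdivrMr // -[X in X < _]mulr1 ltr_pM2l //.
    by rewrite ltr1n.
  have vlt3 : v < gp + d / n.+1%:R.
    by rewrite /v ltrD2l ltr_pM2l // ltf_pV2 ?posrE // ltr_nat.
  have [l /andP[l0 l1] rl] : exists2 l, 0 <= l <= 1 & root (H - v%:P) l.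
    apply: (@poly_ivt R (H - v%:P) 0 1 ler01).
    by rewrite !hornerE subr_le0 subr_ge0 (le_trans h0 (ltW vlt)) (le_trans (ltW vlt2) h1).
  have Hl : H.[l] = v by move: rl; rewrite /root !hornerE subr_eq0 => /eqP.
  have l01 : 0 <= l <= 1 by rewrite l0 l1.
  have Pl : root P l.
    have [lt|gt|eq0] := ltrgtP P.[l] 0; last by rewrite /root eq0.
      by have := hneg l l01 lt; rewrite Hl leNgt vlt.
    by have := hpos l l01 gt; rewrite Hl leNgt vlt2.
  exists (l :: s); split => //=.
  - by rewrite sz.
  - rewrite us andbT; apply/negP => ls.
    by have := allP hs l ls; rewrite /= Hl leNgt vlt3.
  - by rewrite Pl rs.
  - rewrite Hl lexx /=; apply/allP => x xs.
    by apply: le_trans (allP hs x xs); rewrite ltW.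
have [s [sz us rs _]] := key (size P).
by have := max_poly_roots Pn0 rs us; rewrite sz ltnn.
Qed.

Lemma core (R : realType) (S A : finType) (d0 : S -> R) (Rw : S -> A -> R)
  (gamma : R) (Tm1 Tm2 : S -> A -> S -> R) :
  0 <= gamma -> gamma < 1 -> is_dist d0 ->
  is_transition Tm1 -> is_transition Tm2 ->
  ~ trivial_on_NS (value d0 Rw gamma Tm1) ->
  (forall pi pi', is_policy pi -> is_policy pi' ->
     value d0 Rw gamma Tm1 pi' < value d0 Rw gamma Tm1 pi ->
     value d0 Rw gamma Tm2 pi' <= value d0 Rw gamma Tm2 pi) ->
  forall p q, is_policy p -> is_policy q ->
  value d0 Rw gamma Tm1 p = value d0 Rw gamma Tm1 q ->
  value d0 Rw gamma Tm2 p < value d0 Rw gamma Tm2 q -> False.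
Proof.
move=> hg0 hg1 hd hT1 hT2 ntr ne p q hp hq eqF ltG.
set F := value d0 Rw gamma Tm1 in ntr ne eqF *.
set G := value d0 Rw gamma Tm2 in ne ltG *.
have [r [hr Fr]] : exists r, is_policy r /\ F r <> F p.
  apply: contrapT => nex; apply: ntr => pi pi' hpi hpi'.
  have e1 : F pi = F p by apply: contrapT => h; apply: nex; exists pi.
  have e2 : F pi' = F p by apply: contrapT => h; apply: nex; exists pi'.
  by rewrite e1 e2.
have h01 : (0 <= (1:R)) && ((1:R) <= 1) by rewrite ler01 lexx.
have h00 : (0 <= (0:R)) && ((0:R) <= 1) by rewrite lexx ler01.
have [gt|lt] : F p < F r \/ F r < F p.
    have [h|h|h] := ltrgtP (F p) (F r); [by left| by right|].
    by exfalso; apply: Fr.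
- have e0 : 0 < F r - F p by rewrite subr_gt0.
  have [k hk] := tail_close Rw hg0 hg1 hT1 hd hp hr e0.
  have hm1 : F p < F (mix p r k 1).
    by move: hk; rewrite -/F ltr_norml => /andP[h1 h2]; lra.
  have [PF hPF] := value_poly Rw hg0 hg1 hT1 k hd hp hr.
  have [PG hPG] := value_poly Rw hg0 hg1 hT2 k hd hp hr.
  have cond1 : forall l, 0 <= l <= 1 -> 0 < (PF - (F p)%:P).[l] -> G q <= PG.[l].
    move=> l hl; rewrite !hornerE -hPF // -hPG // subr_gt0 eqF => h.
    exact: ne (mix_policy k hp hr hl) hq h.
  have cond2 : forall l, 0 <= l <= 1 -> (PF - (F p)%:P).[l] < 0 -> PG.[l] <= G p.
    move=> l hl; rewrite !hornerE -hPF // -hPG // subr_lt0 => h.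
    exact: ne hp (mix_policy k hp hr hl) h.
  have := crossing ltG cond1 cond2.
  rewrite -hPG // mix0 lexx => /(_ isT).
  have c1 := cond1 1 h01; rewrite !hornerE -hPF // subr_gt0 in c1.
  move=> /(_ (c1 hm1)) /eqP; rewrite subr_eq0 => /eqP eP.
  by move: hm1; rewrite /F hPF // eP hornerC ltxx.
- have e0 : 0 < F p - F r by rewrite subr_gt0.
  have [k hk] := tail_close Rw hg0 hg1 hT1 hd hq hr e0.
  have hm1 : F (mix q r k 1) < F p.
    by move: hk; rewrite -/F ltr_norml eqF => /andP[h1 h2]; lra.
  have [PF hPF] := value_poly Rw hg0 hg1 hT1 k hd hq hr.
  have [PG hPG] := value_poly Rw hg0 hg1 hT2 k hd hq hr.
  have cond1 : forall l, 0 <= l <= 1 -> 0 < ((F p)%:P - PF).[l] -> - G p <= (- PG).[l].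
    move=> l hl; rewrite !hornerE -hPF // -hPG // subr_gt0 lerN2 => h.
    exact: ne hp (mix_policy k hq hr hl) h.
  have cond2 : forall l, 0 <= l <= 1 -> ((F p)%:P - PF).[l] < 0 -> (- PG).[l] <= - G q.
    move=> l hl; rewrite !hornerE -hPF // -hPG // subr_lt0 lerN2 eqF => h.
    exact: ne (mix_policy k hq hr hl) hq h.
  have ltG' : - G q < - G p by rewrite ltrN2.
  have := crossing ltG' cond1 cond2.
  rewrite !hornerN -hPG // mix0 lexx => /(_ isT).
  have c1 := cond1 1 h01; rewrite !hornerE -hPF // subr_gt0 in c1.
  move=> /(_ (c1 hm1)) /eqP; rewrite subr_eq0 => /eqP eP.
  by move: hm1; rewrite /F hPF // -eP hornerC ltxx.
Qed.

Local Close Scope classical_set_scope.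

Theorem mainTheorem1 (R : realType) (S A : finType)
    (d0 : S -> R) (Rw : S -> A -> R) (gamma : R)
    (Tm Tm' : S -> A -> S -> R) :
  (1 < #|A|)%N ->
  0 <= gamma -> gamma < 1 ->
  is_dist d0 ->
  is_transition Tm -> is_transition Tm' ->
  all_reachable d0 Tm -> all_reachable d0 Tm' ->
  ~ trivial_on_NS (value d0 Rw gamma Tm) ->
  ~ trivial_on_NS (value d0 Rw gamma Tm') ->
  ~ equivalent_on_NS (value d0 Rw gamma Tm) (value d0 Rw gamma Tm') ->
  exploitable_on_NS (value d0 Rw gamma Tm) (value d0 Rw gamma Tm').
Proof.
move=> _ hg0 hg1 hd hT hT' _ _ nt1 nt2 neq.
apply: contrapT => nexp.
set F := value d0 Rw gamma Tm in nt1 neq nexp *.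
set G := value d0 Rw gamma Tm' in nt2 neq nexp *.
have ne12 : forall pi pi', is_policy pi -> is_policy pi' ->
    F pi' < F pi -> G pi' <= G pi.
  move=> pi pi' h h' lt; rewrite leNgt; apply/negP => lt2.
  by apply: nexp; exists pi, pi'.
have ne21 : forall pi pi', is_policy pi -> is_policy pi' ->
    G pi' < G pi -> F pi' <= F pi.
  move=> pi pi' h h' lt; rewrite leNgt; apply/negP => lt2.
  by have := ne12 pi' pi h' h lt2; rewrite leNgt lt.
apply: neq => p q hp hq; split.
- move=> hF; rewrite leNgt; apply/negP => hG.
  have [lt|eq] : F q < F p \/ F q = F p.
    by move: hF; rewrite le_eqVlt => /orP[/eqP ->|->]; [right|left].
    by have := ne12 p q hp hq lt; rewrite leNgt hG.
  exact: (core hg0 hg1 hd hT hT' nt1 ne12 hp hq (esym eq) hG).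
- move=> hG; rewrite leNgt; apply/negP => hF.
  have [lt|eq] : G q < G p \/ G q = G p.
    by move: hG; rewrite le_eqVlt => /orP[/eqP ->|->]; [right|left].
    by have := ne21 p q hp hq lt; rewrite leNgt hF.
  exact: (core hg0 hg1 hd hT' hT nt2 ne21 hp hq (esym eq) hF).
Qed.
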